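(* Let $\mathbf K$ be a commutative field and $p\in\mathbb N$. For $A\in\mathbf K^{\mathcal M_p}$ let $L_A\in\mathbf K^{\mathcal M_{p\times p}}$ be the lower triangular element of Toeplitz type defined, for $l\in\mathbb N$ and $0\le u,w<p^l$ (identified with words of length $l$), by $L_A[u,w]=A[u-w]$ if $u\ge w$ and $L_A[u,w]=0$ if $u<w$, where $u-w$ is read as a word of length $l$. Then $$\dim\big(\overline{A}^{rec}\big)\le\dim\big(\overline{L_A}^{rec}\big)\le 2\dim\big(\overline{A}^{rec}\big),$$ and $A\mapsto L_A$ induces an isomorphism of vector spaces between $\mathrm{Rec}_p(\mathbf K)$ and $\mathcal T_{p-rec}(\mathbf K)$, the space of lower triangular elements of Toeplitz type in $\mathrm{Rec}_{p\times p}(\mathbf K)$.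
   Context: For $p,q,l\in\mathbb N$, $\mathcal M_{p\times q}^l$ is the set of pairs $(U,W)$ of words of common length $l$ with $U\in\{0,\dots,p-1\}^l$, $W\in\{0,\dots,q-1\}^l$, $\mathcal M_{p\times q}=\bigcup_l\mathcal M_{p\times q}^l$, and $\mathcal M_p=\mathcal M_{p\times1}$ is identified with the free monoid of words over $\{0,\dots,p-1\}$. Words of length $l$ over $\{0,\dots,p-1\}$ are identified with $\{0,\dots,p^l-1\}$ via $u_1\dots u_l\mapsto\sum_{j=1}^lu_jp^{j-1}$, so that for $A\in\mathbf K^{\mathcal M_{p\times p}}$ the restriction $A[\mathcal M_{p\times p}^l]$ is a $p^l\times p^l$ matrix. $A$ is of Toeplitz type if every $A[\mathcal M_{p\times p}^l]$ is a Toeplitz matrix (entries depend only on $u-w$), and lower triangular if $A[u,w]=0$ whenever $u<w$. Shift maps: $(\rho(S,T)A)[U,W]=A[US,WT]$; the recursive closure $\overline{A}^{rec}$ is the span of all $\rho(S,T)A$; $\mathrm{Rec}_{p\times q}(\mathbf K)$ is the set of $A$ with $\dim\overline{A}^{rec}<\infty$, and $\mathrm{Rec}_p(\mathbf K)=\mathrm{Rec}_{p\times1}(\mathbf K)$. *)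

(* Defs.v *)
From mathcomp Require Import all_boot all_order all_algebra.
Set Implicit Arguments. Unset Strict Implicit. Unset Printing Implicit Defensive.
Import GRing.Theory.
Local Open Scope ring_scope.

(* A word of length l over {0,...,p-1} is identified with the integer
   u = sum_j u_j p^(j-1) in {0,...,p^l-1}; hence an element of
   K^{M_{pxq}} is a family, indexed by l, of functions on
   'I_(p^l) x 'I_(q^l)  (i.e. the p^l x q^l matrices A[M^l_{pxq}]). *)
Definition series (K : Type) (p q : nat) :=
  forall l : nat, 'I_(p ^ l) -> 'I_(q ^ l) -> K.

Definition series_eq (K : Type) (p q : nat) (A B : series K p q) : Prop :=
  forall l u w, A l u w = B l u w.

Lemma concat_word_proof (p l k : nat) (u : 'I_(p ^ l)) (s : 'I_(p ^ k)) :
  (u + p ^ l * s < p ^ (l + k))%N.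
Proof.
have hu := ltn_ord u; have hs := ltn_ord s.
rewrite expnD.
apply: (@leq_trans (p ^ l * s.+1)).
  by rewrite mulnS ltn_add2r.
by rewrite leq_mul2l hs orbT.
Qed.

(* concatenation U S of words (U of length l, S of length k), read as an
   integer: the letters of S are the high-order digits. *)
Definition concat_word (p l k : nat) (u : 'I_(p ^ l)) (s : 'I_(p ^ k))
  : 'I_(p ^ (l + k)) := Ordinal (concat_word_proof u s).

Definition rho (K : Type) (p q k : nat) (s : 'I_(p ^ k)) (t : 'I_(q ^ k))
  (A : series K p q) : series K p q :=
  fun l u w => A (l + k)%N (concat_word u s) (concat_word w t).
Arguments rho {K p q k} s t A l u w.

(* dim(closure^rec A) <= n : the recursive closure (span of all
   rho(S,T) A) is contained in the span of n elements of K^{M_{pxq}}. *)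
Definition rec_dim_le (K : fieldType) (p q : nat) (A : series K p q) (n : nat)
  : Prop :=
  exists F : 'I_n -> series K p q,
    forall (k : nat) (s : 'I_(p ^ k)) (t : 'I_(q ^ k)),
      exists c : 'I_n -> K,
        forall l u w, rho s t A l u w = \sum_(i < n) c i * F i l u w.

Definition is_rec (K : fieldType) (p q : nat) (A : series K p q) : Prop :=
  exists n, rec_dim_le A n.

Definition toeplitz (K : Type) (p : nat) (A : series K p p) : Prop :=
  forall l (u w u' w' : 'I_(p ^ l)), (u + w' = u' + w)%N ->
    A l u w = A l u' w'.

Definition lower_tri (K : fieldType) (p : nat) (A : series K p p) : Prop :=
  forall l (u w : 'I_(p ^ l)), (u < w)%N -> A l u w = 0.

Lemma one_word_proof (l : nat) : (0 < 1 ^ l)%N.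
Proof. by rewrite exp1n. Qed.

Definition zero_word (l : nat) : 'I_(1 ^ l) := Ordinal (one_word_proof l).

Lemma diff_word_proof (p l : nat) (u w : 'I_(p ^ l)) : (u - w < p ^ l)%N.
Proof. exact: leq_ltn_trans (leq_subr _ _) (ltn_ord u). Qed.

(* u - w read as a word of length l (meaningful when w <= u) *)
Definition diff_word (p l : nat) (u w : 'I_(p ^ l)) : 'I_(p ^ l) :=
  Ordinal (diff_word_proof u w).

(* L_A[u,w] = A[u - w] if u >= w, 0 otherwise ; A in K^{M_p} = K^{M_{px1}} *)
Definition LA (K : fieldType) (p : nat) (A : series K p 1) : series K p p :=
  fun l u w => if (w <= u)%N then A l (diff_word u w) (zero_word l) else 0.
Arguments LA {K p} A l u w.

(* Main.v *)
Require Import Defs.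
From mathcomp Require Import all_boot all_order all_algebra.
From mathcomp Require Import zify.
Import GRing.Theory.
Local Open Scope ring_scope.

Lemma one_ord_eq (m : nat) (Z Z' : 'I_(1 ^ m)) : Z = Z'.
Proof.
have e : forall z : nat, (z < 1 ^ m)%N -> (z < 1)%N by move=> z; rewrite exp1n.
have h1 := e _ (ltn_ord Z); have h2 := e _ (ltn_ord Z').
apply: ord_inj; lia.
Qed.

Definition zero_of (p l : nat) (u : 'I_(p ^ l)) : 'I_(p ^ l) :=
  Ordinal (leq_ltn_trans (leq0n u) (ltn_ord u)).
Arguments zero_of {p l} u.

Lemma restr_rec (K : fieldType) (p : nat) (B : series K p p) (A : series K p 1) (n : nat) :
  (forall l u w, A l u w = B l u (zero_of u)) -> rec_dim_le B n -> rec_dim_le A n.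
Proof.
move=> hAB [F hF].
exists (fun i l u w => F i l u (zero_of u)) => k s t.
have [c hc] := hF k s (zero_of s).
exists c => l u w.
rewrite -hc /rho hAB; congr (B _ _ _); apply: ord_inj => /=; lia.
Qed.

Arguments restr_rec {K p B A n}.

Lemma rec_dim_cat (K : fieldType) p q (X : series K p q) n m
  (F1 : 'I_n -> series K p q) (F2 : 'I_m -> series K p q) :
  (forall k (s : 'I_(p ^ k)) (t : 'I_(q ^ k)), exists c1 c2,
     forall l u w, rho s t X l u w =
        \sum_(i < n) c1 i * F1 i l u w + \sum_(i < m) c2 i * F2 i l u w) ->
  rec_dim_le X (n + m).
Proof.
move=> H.
exists (fun i => match split i with inl j => F1 j | inr j => F2 j end) => k s t.
have [c1 [c2 h]] := H k s t.
exists (fun i => match split i with inl j => c1 j | inr j => c2 j end) => l u w.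
rewrite h big_split_ord /=; congr (_ + _); apply: eq_bigr => i _.
- by rewrite -[lshift m i]/(unsplit (inl i)) unsplitK.
- by rewrite -[rshift n i]/(unsplit (inr i)) unsplitK.
Qed.

Definition UA (K : fieldType) (p : nat) (A : series K p 1) : series K p p :=
  fun l u w => if (u < w)%N then A l (insubd u (u + p ^ l - w)%N) (zero_word l) else 0.

Arguments UA {K p} A l u w.

Lemma eval_lemma (K : fieldType) (p : nat) (A : series K p 1) n
  (G : 'I_n -> series K p 1) k (x : 'I_(p ^ k)) (c : 'I_n -> K) :
  (forall l u w, rho x (zero_word k) A l u w = \sum_(i < n) c i * G i l u w) ->
  forall l (y : 'I_(p ^ l)) (X : 'I_(p ^ (l + k))) Z,
    val X = (y + p ^ l * x)%N ->
    A (l + k)%N X Z = \sum_(i < n) c i * G i l y (zero_word l).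
Proof.
move=> H l y X Z hX.
rewrite -H /rho; congr (A _ _ _); last exact: one_ord_eq.
by apply: val_inj.
Qed.

Arguments eval_lemma {K p A n G k x c}.

Lemma part2 (K : fieldType) (p : nat) (A : series K p 1) (n : nat) :
  rec_dim_le A n -> rec_dim_le (LA A) (2 * n).
Proof.
move=> [G hG].
rewrite mul2n -addnn.
apply: (@rec_dim_cat _ _ _ _ _ _ (fun i => LA (G i)) (fun i => UA (G i))).
move=> k s t.
have hs := ltn_ord s.
pose x1 : 'I_(p ^ k) := insubd s (s - t)%N.
pose x2 : 'I_(p ^ k) := insubd s (s - t - 1)%N.
have vx1 : val x1 = (s - t)%N by rewrite val_insubd ifT //; lia.
have vx2 : val x2 = (s - t - 1)%N by rewrite val_insubd ifT //; lia.
have [c1 h1] := hG k x1 (zero_word k).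
have [c2 h2] := hG k x2 (zero_word k).
exists (fun i => if (t <= s)%N then c1 i else 0).
exists (fun i => if (t < s)%N then c2 i else 0).
move=> l u w.
have hu := ltn_ord u; have hw := ltn_ord w.
rewrite /rho /LA /UA /=.
set P := (p ^ l)%N.
have hu' : (u < P)%N by []. have hw' : (w < P)%N by [].
have hPt : (t <= s)%N -> (P * s = P * t + P * (s - t))%N.
  by move=> hts; rewrite -mulnDr subnKC.
have hPt2 : (s < t)%N -> (P * t = P * s + P * (t - s))%N.
  by move=> hts; rewrite -mulnDr subnKC // ltnW.
have hPt3 : (s < t)%N -> (P <= P * (t - s))%N.
  by move=> hts; rewrite leq_pmulr // subn_gt0.
case: (ltngtP t s) => hts.
- have hd : (P * (s - t) = P + P * (s - t - 1))%N.
    by rewrite -{2}(muln1 P) -mulnDr; congr (_ * _)%N; lia.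
  have := hPt (ltnW hts) => {}hPt.
  have hc : (w + P * t <= u + P * s)%N.
    case: (leqP w u) => hwu; first lia.
    clear -hd hPt hwu hw'. lia.
  rewrite hc.
  case: (leqP w u) => hwu.
  + rewrite (eval_lemma h1 _ (diff_word u w)) /=; try by rewrite vx1; lia.
    by rewrite [X in _ = _ + X]big1 ?addr0 // => i _; rewrite mulr0.
  + have vy : (u + P - w < P)%N by lia.
    rewrite (eval_lemma h2 _ (insubd u (u + P - w)%N)) /=; try by rewrite vx2 val_insubd vy; lia.
    by rewrite [X in _ = X + _]big1 ?add0r // => i _; rewrite mulr0.
- have := hPt2 hts; have := hPt3 hts => ? ?.
  have hc : (w + P * t <= u + P * s)%N = false by apply/negbTE; rewrite -ltnNge; lia.
  rewrite hc.
  by rewrite !big1 ?addr0 // => i _; rewrite mul0r.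
- have := hPt (eq_leq hts) => {}hPt.
  rewrite [X in _ = _ + X]big1 ?addr0; last by move=> i _; rewrite mul0r.
  case: (leqP w u) => hwu.
  + have hc : (w + P * t <= u + P * s)%N by lia.
    rewrite hc.
    by rewrite (eval_lemma h1 _ (diff_word u w)) /=; try by rewrite vx1; lia.
  + have hc : (w + P * t <= u + P * s)%N = false by apply/negbTE; rewrite -ltnNge; lia.
    by rewrite hc big1 // => i _; rewrite mulr0.
Qed.

Theorem mainTheorem10 (K : fieldType) (p : nat) :
  (* dim(A^rec) <= dim(L_A^rec)  (in N u {oo}) *)
  (forall (A : series K p 1) (n : nat), rec_dim_le (LA A) n -> rec_dim_le A n) /\
  (* dim(L_A^rec) <= 2 dim(A^rec)  (in N u {oo}) *)
  (forall (A : series K p 1) (n : nat), rec_dim_le A n -> rec_dim_le (LA A) (2 * n)) /\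
  (* A |-> L_A is linear *)
  (forall (a : K) (A B : series K p 1),
     series_eq (LA (fun l u w => a * A l u w + B l u w))
               (fun l u w => a * LA A l u w + LA B l u w)) /\
  (* it maps Rec_p(K) into T_{p-rec}(K) *)
  (forall A : series K p 1,
     is_rec A -> [/\ is_rec (LA A), lower_tri (LA A) & toeplitz (LA A)]) /\
  (* injectively *)
  (forall A B : series K p 1, is_rec A -> is_rec B ->
     series_eq (LA A) (LA B) -> series_eq A B) /\
  (* and onto T_{p-rec}(K) *)
  (forall B : series K p p, is_rec B -> lower_tri B -> toeplitz B ->
     exists A : series K p 1, is_rec A /\ series_eq (LA A) B).
Proof.
have LA0 : forall (A : series K p 1) l u w, A l u w = LA A l u (zero_of u).
  move=> A l u w; rewrite /LA /zero_of /=; congr (A _ _ _); last exact: one_ord_eq.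
  by apply: val_inj => /=; rewrite subn0.
split; first by move=> A n; apply: restr_rec.
split; first exact: part2.
split.
  move=> a A B l u w; rewrite /LA; case: ifP => _ //.
  by rewrite mulr0 addr0.
split.
  move=> A [n hn]; split.
  - by exists (2 * n)%N; apply: part2.
  - by move=> l u w huw; rewrite /LA ifN // -ltnNge.
  - move=> l u w u' w' he; rewrite /LA.
    have -> : (w' <= u')%N = (w <= u)%N by apply/idP/idP; lia.
    case: ifP => // hwu; congr (A _ _ _); apply: ord_inj => /=; lia.
split.
  move=> A B _ _ he l u w; by rewrite (LA0 A l u w) (LA0 B l u w) he.
move=> B hB hlt htp.
exists (fun l u w => B l u (zero_of u)); split.
  by have [n hn] := hB; exists n; apply: (restr_rec (B := B)).
move=> l u w; rewrite /LA.
case: leqP => hwu; last by rewrite hlt.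
apply: htp => /=; lia.
Qed.
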